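(* Let $S\subseteq\mathbb{Z}$ and let $\mathbf{a}=(a_i)_{i=0}^n$ be any $n+1$ integers in $S$. Then for any $\mathcal{T}\subseteq\mathbb{N}$, the product $$\prod_{b\in\mathcal{T}}b^{\gamma(S,b,\mathbf{a})},\qquad \gamma(S,b,\mathbf{a}):=\sum_{0\le i<j\le n}\operatorname{ord}_b(a_i-a_j),$$ is a multiple of $0!_{S,\mathcal{T}}\,1!_{S,\mathcal{T}}\cdots n!_{S,\mathcal{T}}$.
   Context: $\mathbb{N}=\{0,1,2,\dots\}$. For an integer $b\ge0$ and $a\in\mathbb{Z}$ define $\operatorname{ord}_b(a):=\sup\{k\in\mathbb{N}: a\mathbb{Z}\subseteq b^k\mathbb{Z}\}$ (convention $0^0=1$); thus for $b\ge2$ it is the largest $k$ with $b^k\mid a$ ($+\infty$ for $a=0$), $\operatorname{ord}_0(a)=+\infty$ if $a=0$ and $0$ otherwise, and $\operatorname{ord}_1(a)=+\infty$. For nonempty $S\subseteq\mathbb{Z}$, a $b$-ordering of $S$ is a sequence $(a_i)_{i\ge0}$ in $S$ such that for each $i\ge1$, $a_i$ attains $\min_{a'\in S}\sum_{j=0}^{i-1}\operatorname{ord}_b(a'-a_j)$; the $b$-exponent sequence is $\alpha_k(S,b):=\sum_{j=0}^{k-1}\operatorname{ord}_b(a_k-a_j)$ for any $b$-ordering (independent of the choice). For $\mathcal{T}\subseteq\mathbb{N}$ the generalized factorial is $k!_{S,\mathcal{T}}:=\prod_{b\in\mathcal{T}}b^{\alpha_k(S,b)}$, with conventions $b^{+\infty}=0$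 for $b=0$ and $b\ge2$, $1^{+\infty}=1$, and $b^0=1$ for all $b\in\mathbb{N}$ (these conventions also apply to $b^{\gamma}$). *)

(* Defs.v *)
From Stdlib Require Import ClassicalEpsilon.
From mathcomp Require Import all_boot all_order all_algebra.
Set Implicit Arguments. Unset Strict Implicit. Unset Printing Implicit Defensive.
Import Order.TTheory GRing.Theory Num.Theory.

(* Extended naturals N ∪ {+oo}: [Some k] = k, [None] = +oo. *)
Definition enat := option nat.

Definition addE (x y : enat) : enat :=
  match x, y with Some m, Some n => Some (m + n) | _, _ => None end.

Definition leE (x y : enat) : bool :=
  match x, y with
  | _, None => true
  | None, Some _ => false
  | Some m, Some n => m <= n
  end.

Definition sumE (s : seq enat) : enat := foldr addE (Some 0) s.

(* b^e with conventions b^(+oo) = 0 for b = 0 and b >= 2, 1^(+oo) = 1,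
   and b^0 = 1 (in particular 0^0 = 1, as for ssrnat's expn). *)
Definition powE (b : nat) (e : enat) : nat :=
  match e with Some k => b ^ k | None => if b == 1 then 1 else 0 end.

(* ord_b(a) = sup { k in N : aZ ⊆ b^k Z } = sup { k : b^k | a }.
   Since b^0 = 1 divides a and {k : b^k | a} is downward closed, this sup is
   the least k such that b^(k+1) does not divide a, or +oo if there is none. *)
Definition ord (b : nat) (a : int) : enat :=
  match excluded_middle_informative
          (exists k, ~~ ((b ^ k.+1)%:Z %| a)%Z) with
  | left H => Some (ex_minn H)
  | right _ => None
  end.

Definition sumord (b : nat) (a : nat -> int) (i : nat) (x : int) : enat :=
  sumE [seq ord b (x - a j)%R | j <- iota 0 i].

Definition is_b_ordering (S : int -> Prop) (b : nat) (a : nat -> int) : Prop :=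
  (forall i, S (a i)) /\
  (forall i, 1 <= i -> forall a', S a' -> leE (sumord b a i (a i)) (sumord b a i a')).

(* A (classically chosen) b-ordering of S (junk if S is empty). *)
Definition some_b_ordering (S : int -> Prop) (b : nat) : nat -> int :=
  epsilon (inhabits (fun _ : nat => 0%R)) (is_b_ordering S b).

Definition alpha (S : int -> Prop) (b k : nat) : enat :=
  let a := some_b_ordering S b in sumord b a k (a k).

Definition gamma (b n : nat) (a : nat -> int) : enat :=
  sumE [seq ord b (a ij.1 - a ij.2)%R
       | ij <- [seq (i, j) | i <- iota 0 n.+1, j <- iota 0 n.+1] & ij.1 < ij.2].

(* [HasProd T f v]: the (possibly infinite) product prod_{b in T} f b of
   natural numbers is well defined and equals v: either some factor is 0
   (and then v = 0), or all factors are nonzero, only finitely many differ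
   from 1, and v is the product of those. *)
Definition HasProd (T : nat -> Prop) (f : nat -> nat) (v : nat) : Prop :=
  (exists b, T b /\ f b = 0 /\ v = 0) \/
  ((forall b, T b -> f b <> 0) /\
   exists s : seq nat, uniq s /\ (forall b, b \in s <-> (T b /\ f b <> 1)) /\
                       v = \prod_(b <- s) f b).

(* k!_{S,T} = prod_{b in T} b^{alpha_k(S,b)} equals w. *)
Definition IsGenFact (S : int -> Prop) (T : nat -> Prop) (k w : nat) : Prop :=
  HasProd T (fun b => powE b (alpha S b k)) w.

(* Main.v *)
Require Import Defs.
From Stdlib Require Import ClassicalEpsilon.
From mathcomp Require Import all_boot all_order all_algebra zify.
Set Implicit Arguments. Unset Strict Implicit. Unset Printing Implicit Defensive.
Import Order.TTheory GRing.Theory Num.Theory.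

Lemma leE_refl e : leE e e.
Proof. by case: e => //= n. Qed.

Lemma leE_trans x y z : leE x y -> leE y z -> leE x z.
Proof. by case: x; case: y; case: z => //= ? ? ?; apply: leq_trans. Qed.

Lemma addEC x y : addE x y = addE y x.
Proof. by case: x; case: y => //= ? ?; rewrite addnC. Qed.

Lemma addEA x y z : addE x (addE y z) = addE (addE x y) z.
Proof. by case: x; case: y; case: z => //= ? ? ?; rewrite addnA. Qed.

Lemma add0E x : addE (Some 0) x = x.
Proof. by case: x. Qed.

Lemma leE_add x y x' y' : leE x x' -> leE y y' -> leE (addE x y) (addE x' y').
Proof. by case: x; case: y; case: x'; case: y' => //= ? ? ? ?; apply: leq_add. Qed.

Lemma leE_addr x y : leE x (addE x y).
Proof. by case: x; case: y => //= ? ?; apply: leq_addr. Qed.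

Lemma sumE_cat s1 s2 : sumE (s1 ++ s2) = addE (sumE s1) (sumE s2).
Proof. elim: s1 => [|x s IH] /=; first by case: (sumE s2). by rewrite IH addEA. Qed.

Lemma sumE_rem (T : eqType) (f : T -> enat) x s : x \in s ->
  sumE [seq f y | y <- s] = addE (f x) (sumE [seq f y | y <- rem x s]).
Proof.
elim: s => [|y s IH] //=; rewrite inE; case: (eqVneq y x) => [-> _|ne /= xs] //=.
by rewrite (IH xs) !addEA (addEC (f y)).
Qed.

Lemma leE_Some m e : leE (Some m) e = (if e is Some k then m <= k else true).
Proof. by case: e. Qed.

Lemma enat_ext e1 e2 : (forall m, leE (Some m) e1 = leE (Some m) e2) -> e1 = e2.
Proof.
case: e1 => [k1|]; case: e2 => [k2|] H //=.
- by apply/congr1/eqP; rewrite eqn_leq; move: (H k1) (H k2) => /= <- ->; rewrite !leqnn.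
- by move: (H k1.+1); rewrite /= ltnn.
- by move: (H k2.+1); rewrite /= ltnn.
Qed.

Lemma sumE_None s : None \in s -> sumE s = None.
Proof. by elim: s => //= x s IH; rewrite inE => /orP[/eqP<-|/IH->]; case: x. Qed.

Lemma sumE_Some s : None \notin s -> sumE s = Some (sumn (map (fun e => odflt 0 e) s)).
Proof.
elim: s => //= x s IH; rewrite inE negb_or => /andP[nx /IH->].
by case: x nx.
Qed.

Lemma mem_leE_sum e s : e \in s -> leE e (sumE s).
Proof.
elim: s => //= x s IH; rewrite inE => /orP[/eqP->|/IH H]; first exact: leE_addr.
rewrite addEC; apply: leE_trans H _; exact: leE_addr.
Qed.

Lemma sum_lt_count (j M : nat) : j <= M -> \sum_(k < M) (k < j) = j.
Proof.
elim: M j => [|M IH] j hj; first by rewrite big_ord0; case: j hj.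
rewrite big_ord_recr /=; case: (ltnP M j) => h.
  have -> : j = M.+1 by apply/eqP; rewrite eqn_leq hj h.
  rewrite (eq_bigr (fun k : 'I_M => (k < M) : nat)) => [|i _]; last first.
    by rewrite (ltn_ord i) ltnS ltnW.
  by rewrite IH // addn1.
by rewrite IH // addn0.
Qed.

Lemma sumn_count (s : seq nat) M : all (fun j => j <= M) s ->
  sumn s = \sum_(k < M) count (fun j => k < j) s.
Proof.
elim: s => [|j s IH] /=; first by rewrite big1.
move=> /andP[hj /IH ->]; rewrite big_split /= sum_lt_count //.
Qed.

Lemma count_le_sum (u w : seq enat) :
  (forall k, count (leE (Some k)) u <= count (leE (Some k)) w) -> leE (sumE u) (sumE w).
Proof.
move=> H; case: (boolP (None \in w)) => [/sumE_None -> | nw]; first by case: (sumE u).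
set M := (sumn (map (fun e => odflt 0 e) w)).+1.
have cw : count (leE (Some M)) w = 0.
  apply/eqP; rewrite -leqn0 leqNgt -has_count; apply/hasPn => e ew.
  rewrite leE_Some; case: e ew => [k|] ew; last by rewrite ew in nw.
  rewrite -ltnNge ltnS.
  have : k \in map (fun e => odflt 0 e) w by apply/mapP; exists (Some k).
  move=> /perm_to_rem/perm_sumn -> /=; exact: leq_addr.
have nu : None \notin u.
  apply/negP => nu; have := H M; rewrite cw leqn0 => /eqP c0.
  have : has (leE (Some M)) u by apply/hasP; exists None.
  by rewrite has_count c0.
rewrite (sumE_Some nu) (sumE_Some nw) /=.
have allu : forall e, e \in u -> leE e (Some M.-1).
  move=> e eu; case: e eu => [k|] eu; last by rewrite eu in nu.
  rewrite /= leqNgt; apply/negP => hk.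
  have := H M; rewrite cw leqn0 => /eqP c0.
  have : has (leE (Some M)) u by apply/hasP; exists (Some k) => //=.
  by rewrite has_count c0.
have allw : forall e, e \in w -> leE e (Some M.-1).
  move=> e ew; case: e ew => [k|] ew; last by rewrite ew in nw.
  have : k \in map (fun e => odflt 0 e) w by apply/mapP; exists (Some k).
  by move=> /perm_to_rem/perm_sumn /= ->; apply: leq_addr.
rewrite (@sumn_count _ M.-1); last first.
  by apply/allP => j /mapP[e eu ->]; move: (allu e eu); case: e eu.
rewrite (@sumn_count (map _ w) M.-1); last first.
  by apply/allP => j /mapP[e eu ->]; move: (allw e eu); case: e eu.
apply: leq_sum => k _; rewrite !count_map.
have E : forall s, None \notin s -> count (preim (fun e => odflt 0 e) (fun j => k < j)) s
   = count (leE (Some k.+1)) s.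
  move=> s ns; apply: eq_in_count => e es /=; case: e es => // es.
  by rewrite es in ns.
by rewrite !E //; apply: H.
Qed.

Lemma dvdz_natexp b m k (z : int) : m <= k -> ((b ^ k)%:Z %| z)%Z -> ((b ^ m)%:Z %| z)%Z.
Proof.
move=> mk; apply: dvdz_trans; rewrite dvdzE !absz_nat; exact: dvdn_exp2l.
Qed.

Lemma ord_le b m (z : int) : leE (Some m) (ord b z) = ((b ^ m)%:Z %| z)%Z.
Proof.
rewrite /ord; case: excluded_middle_informative => [H|H].
  case: ex_minnP => k Hk Hmin /=.
  case: (leqP m k) => mk.
    case: m mk => [|m] mk; first by rewrite expn0 dvd1z.
    symmetry; apply/negPn/negP => Hn; have := Hmin _ Hn; lia.
  symmetry; apply/negP => Hd; move/negP: Hk; apply.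
  exact: dvdz_natexp Hd.
case: m => [|m] /=; first by rewrite expn0 dvd1z.
symmetry; apply/negPn/negP => Hn; apply: H; by exists m.
Qed.

Lemma ord_ext b (z1 z2 : int) : (forall m, ((b ^ m)%:Z %| z1)%Z = ((b ^ m)%:Z %| z2)%Z) ->
  ord b z1 = ord b z2.
Proof. by move=> H; apply: enat_ext => m; rewrite !ord_le. Qed.

Lemma ordN b (x y : int) : ord b (x - y) = ord b (y - x).
Proof. apply: ord_ext => m; by rewrite -opprB dvdzE abszN -dvdzE. Qed.

Lemma ord0 b : ord b 0 = None.
Proof. by apply: enat_ext => m; rewrite ord_le dvdz0. Qed.

Lemma ord_fin b (z : int) : b != 1 -> z != 0 -> exists k, ord b z = Some k.
Proof.
move=> b1 z0; case E: (ord b z) => [k|]; first by exists k.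
exfalso.
case: b b1 E => [|[|b]] // _ E.
  by move: (ord_le 0 1 z); rewrite E /= dvd0z (negbTE z0).
move: (ord_le b.+2 `|z|.+1 z); rewrite E /= dvdzE absz_nat => /esym Hd.
have := dvdn_leq _ Hd; rewrite absz_gt0 z0 => /(_ isT).
have := ltn_expl `|z|.+1 (isT : 1 < b.+2); lia.
Qed.

Lemma ord_Some0 b (z : int) : ~~ ((b%:Z) %| z)%Z -> ord b z = Some 0.
Proof.
move=> H; case E: (ord b z) => [[|k]|] //.
  by move: (ord_le b 1 z); rewrite E /= expn1 (negbTE H).
by move: (ord_le b 1 z); rewrite E /= expn1 (negbTE H).
Qed.

Lemma ord_big b (z : int) : z != 0 -> `|z| < b -> ord b z = Some 0.
Proof.
move=> z0 zb; apply: ord_Some0; rewrite dvdzE absz_nat; apply/negP => /dvdn_leq.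
rewrite absz_gt0 z0 => /(_ isT); lia.
Qed.

Definition cong b k (x y : int) : bool := ((b ^ k)%:Z %| (x - y)%R)%Z.

Lemma cong_refl b k x : cong b k x x.
Proof. by rewrite /cong subrr dvdz0. Qed.
Lemma cong_sym b k x y : cong b k x y = cong b k y x.
Proof. by rewrite /cong -opprB dvdzE abszN -dvdzE. Qed.
Lemma cong_trans b k x y z : cong b k x y -> cong b k y z -> cong b k x z.
Proof.
rewrite /cong => h1 h2; have -> : (x - z = (x - y) + (y - z))%R by rewrite addrA subrK.
exact: rpredD.
Qed.
Lemma cong_mono b k k' x y : k <= k' -> cong b k' x y -> cong b k x y.
Proof. by move=> kk; apply: dvdz_natexp. Qed.

Lemma pigeon b k (X C : seq int) : size C < size X ->
  exists2 r, r \in X & count (cong b k r) C < count (cong b k r) X.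
Proof.
move: {2}(size X) (leqnn (size X)) => n; elim: n X C => [|n IH] X C.
  by rewrite leqn0 => /eqP ->.
case: X => [|r X] // hs hc.
case: (ltnP (count (cong b k r) C) (count (cong b k r) (r :: X))) => h.
  by exists r; rewrite ?mem_head.
set X' := filter (predC (cong b k r)) (r :: X).
set C' := filter (predC (cong b k r)) C.
have sX' : size X' = size (r :: X) - count (cong b k r) (r :: X).
  by rewrite /X' size_filter -(count_predC (cong b k r) (r :: X)) addKn.
have sC' : size C' = size C - count (cong b k r) C.
  by rewrite /C' size_filter -(count_predC (cong b k r) C) addKn.
have cX : count (cong b k r) (r :: X) >= 1 by rewrite /= cong_refl.
have cC : count (cong b k r) C <= size C by apply: count_size.
have cXs : count (cong b k r) (r :: X) <= size (r :: X) by apply: count_size.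
have [r' r'X hr'] : exists2 r', r' \in X' & count (cong b k r') C' < count (cong b k r') X'.
  apply: IH; rewrite sX' ?sC'; move: hs hc h cX cC cXs;
  move: (count (cong b k r) (r :: X)) (count (cong b k r) C) (size (r :: X)) (size C) => *; lia.
exists r'; first by move: r'X; rewrite mem_filter => /andP[].
have nr : ~~ cong b k r r' by move: r'X; rewrite mem_filter => /andP[].
have E : forall s, count (cong b k r') (filter (predC (cong b k r)) s) = count (cong b k r') s.
  move=> s; rewrite count_filter; apply: eq_count => y /=.
  case h1: (cong b k r' y) => //=; apply/negP => h2; move/negP: nr; apply.
  by apply: cong_trans h2 _; rewrite cong_sym.
by rewrite -(E C) -(E (r :: X)).
Qed.

Lemma descent b N : forall m (X C : seq int), size C < size X ->
  (forall u v, u \in X ++ C -> v \in X ++ C -> cong b m u v) ->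
  (forall x x', x \in X -> x' \in X -> cong b (m + N) x x' -> x = x') ->
  exists2 x, x \in X & forall k, m <= k -> count (cong b k x) C < count (cong b k x) X.
Proof.
elim: N => [|N IH] m X C hs hall hsep.
  case: X hs hall hsep => [|x0 X] // hs hall hsep.
  have allx : forall y, y \in x0 :: X -> y = x0.
    move=> y yX; apply: hsep => //; first by rewrite mem_head.
    by rewrite addn0; apply: hall; rewrite mem_cat ?yX ?mem_head.
  exists x0; first by rewrite mem_head.
  move=> k _; have -> : count (cong b k x0) (x0 :: X) = size (x0 :: X).
    apply/eqP; rewrite -all_count; apply/allP => y /allx ->; exact: cong_refl.
  exact: leq_ltn_trans (count_size _ _) hs.
have [r rX hr] := pigeon b m.+1 hs.
set X' := filter (cong b m.+1 r) X; set C' := filter (cong b m.+1 r) C.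
have [x xX' hx] : exists2 x, x \in X' & forall k, m.+1 <= k -> count (cong b k x) C' < count (cong b k x) X'.
  apply: IH; first by rewrite /X' /C' !size_filter.
    move=> u v; rewrite !mem_cat !mem_filter => hu hv.
    have hu' : cong b m.+1 r u by case/orP: hu => /andP[].
    have hv' : cong b m.+1 r v by case/orP: hv => /andP[].
    by apply: cong_trans hv'; rewrite cong_sym.
  move=> y y'; rewrite !mem_filter => /andP[_ yX] /andP[_ y'X]; rewrite addSnnS; exact: hsep.
have xX : x \in X by move: xX'; rewrite mem_filter => /andP[].
have xr : cong b m.+1 r x by move: xX'; rewrite mem_filter => /andP[].
exists x => // k; rewrite leq_eqVlt => /orP[/eqP <-|mk].
  have -> : count (cong b m x) C = size C.
    apply/eqP; rewrite -all_count; apply/allP => y yC; apply: hall; rewrite mem_cat ?xX ?yC ?orbT //.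
  have -> : count (cong b m x) X = size X.
    apply/eqP; rewrite -all_count; apply/allP => y yX; apply: hall; rewrite mem_cat ?xX ?yX ?orbT //.
  exact: hs.
have E : forall s, count (cong b k x) (filter (cong b m.+1 r) s) = count (cong b k x) s.
  move=> s; rewrite count_filter; apply: eq_count => y /=.
  case h1: (cong b k x y) => //=; apply: cong_trans xr _; exact: cong_mono h1.
have := hx k mk; rewrite /X' /C' !E //.
Qed.

Lemma list_bound (T : eqType) (P : nat -> T -> Prop) (l : seq T) :
  (forall N N' t, N <= N' -> P N t -> P N' t) ->
  (forall t, t \in l -> exists N, P N t) -> exists N, forall t, t \in l -> P N t.
Proof.
move=> mono; elim: l => [|t l IH] H; first by exists 0.
have [N1 H1] := H t (mem_head _ _).
have [N2 H2] : exists N, forall t, t \in l -> P N t.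
  by apply: IH => t' t'l; apply: H; rewrite inE t'l orbT.
exists (maxn N1 N2) => t'; rewrite inE => /orP[/eqP->|t'l].
  by apply: mono H1; rewrite leq_maxl.
by apply: mono (H2 _ t'l); rewrite leq_maxr.
Qed.

Lemma sep_bound b (X : seq int) : b != 1 ->
  exists N, forall x x', x \in X -> x' \in X -> cong b N x x' -> x = x'.
Proof.
move=> b1.
have [N HN] : exists N, forall p, p \in [seq (x, y) | x <- X, y <- X] -> p.1 != p.2 -> ~~ cong b N p.1 p.2.
  apply: (@list_bound _ (fun N (p : int * int) => p.1 != p.2 -> ~~ cong b N p.1 p.2)).
  move=> N N' [x y] /= NN' H ne; apply/negP => /(cong_mono NN'); apply/negP; exact: H.
  move=> [x y] _ /=; case: (eqVneq x y) => [->|ne]; first by exists 0.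
  have [k hk] := @ord_fin b (x - y)%R b1 (ltac:(by rewrite subr_eq0)).
  exists k.+1 => _; move: (ord_le b k.+1 (x - y)%R); rewrite hk /= ltnn /cong => <- //.
exists N => x x' xX x'X hc; apply/eqP; apply: contraLR hc => ne.
  have := HN (x, x'); rewrite /=; apply => //; apply/allpairsP; by exists (x, x').
Qed.

Lemma key b (X C : seq int) : b != 1 -> size C < size X ->
  exists2 x, x \in X & leE (sumE [seq ord b (x - c)%R | c <- C]) (sumE [seq ord b (x - y)%R | y <- rem x X]).
Proof.
move=> b1 hs; have [N HN] := sep_bound X b1.
have [x xX hx] := @descent b N 0 X C hs (fun u v _ _ => ltac:(by rewrite /cong expn0 dvd1z)) HN.
exists x => //; apply: count_le_sum => k; rewrite !count_map.
have E : forall s, count (preim (fun y => ord b (x - y)%R) (leE (Some k))) s = count (cong b k x) s.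
  by move=> s; apply: eq_count => y; rewrite /preim /cong /= -ord_le.
rewrite !E; have := hx k (leq0n _).
by rewrite ((permP (perm_to_rem xX)) (cong b k x)) /= cong_refl add1n ltnS.
Qed.

Lemma min_nat (P : nat -> Prop) : (exists k, P k) -> exists k, P k /\ forall j, P j -> k <= j.
Proof.
case=> k; elim/ltn_ind: k => k IH Pk.
case: (Classical_Prop.classic (exists j, j < k /\ P j)) => [[j [jk Pj]]|H].
  exact: (IH j).
exists k; split => // j Pj; rewrite leqNgt; apply/negP => jk; apply: H; by exists j.
Qed.

Lemma argmin (S : int -> Prop) s0 (g : int -> enat) : S s0 ->
  exists y, S y /\ forall y', S y' -> leE (g y) (g y').
Proof.
move=> Ss0.
case: (Classical_Prop.classic (exists k y, S y /\ g y = Some k)) => [H|H].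
  have [k [[y [Sy gy]] hk]] := min_nat H.
  exists y; split => // y' Sy'; rewrite gy; case E: (g y') => [k'|] //=.
  by apply: hk; exists y'.
exists s0; split => // y' Sy'; have -> : g s0 = None.
  by case E: (g s0) => [k|] //; exfalso; apply: H; exists k, s0.
by have -> : g y' = None by case E: (g y') => [k|] //; exfalso; apply: H; exists k, y'.
Qed.

Definition Fb b (l : seq int) (y : int) : enat := sumE [seq ord b (y - z)%R | z <- l].

Definition nextb (S : int -> Prop) b (l : seq int) : int :=
  epsilon (inhabits 0%R) (fun y => S y /\ forall y', S y' -> leE (Fb b l y) (Fb b l y')).

Fixpoint pre (S : int -> Prop) b i : seq int :=
  if i is i'.+1 then rcons (pre S b i') (nextb S b (pre S b i')) else [::].

Lemma exists_ordering (S : int -> Prop) b s0 : S s0 -> exists c, is_b_ordering S b c.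
Proof.
move=> Ss0; pose c := fun i => nextb S b (pre S b i).
have spec : forall l, S (nextb S b l) /\ forall y', S y' -> leE (Fb b l (nextb S b l)) (Fb b l y').
  move=> l; exact: (epsilon_spec (inhabits 0%R) (fun y => S y /\ forall y', S y' -> leE (Fb b l y) (Fb b l y')) (argmin _ Ss0)).
have pre_eq : forall i, pre S b i = map c (iota 0 i).
  elim=> [|i IH] //; by rewrite [pre _ _ _]/= IH -addn1 iotaD map_cat cats1 add0n -IH.
exists c; split; first by move=> i; case: (spec (pre S b i)).

move=> i _ a' Sa'; rewrite /sumord.
have E : forall x, sumE [seq ord b (x - c j)%R | j <- iota 0 i] = Fb b (pre S b i) x.
  by move=> x; rewrite pre_eq /Fb -map_comp.
rewrite !E.
exact: (proj2 (spec (pre S b i)) a' Sa').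
Qed.

Lemma some_ordering_ok (S : int -> Prop) b s0 : S s0 -> is_b_ordering S b (some_b_ordering S b).
Proof. move=> Ss0; exact: (epsilon_spec (inhabits (fun _ : nat => 0%R)) (is_b_ordering S b) (exists_ordering b Ss0)). Qed.

Fixpoint G b (s : seq int) : enat :=
  if s is x :: s' then addE (sumE [seq ord b (x - y)%R | y <- s']) (G b s') else Some 0.

Lemma G_rem b x s : x \in s -> G b s = addE (sumE [seq ord b (x - y)%R | y <- rem x s]) (G b (rem x s)).
Proof.
elim: s => [|y s IH] //=; rewrite inE; case: (eqVneq y x) => [-> _|ne /= xs] //=.
rewrite (IH xs) (sumE_rem (fun z => ord b (y - z)%R) xs) ordN.
rewrite /sumE /= -!/(sumE _).
set A := ord b (x - y)%R; set B := sumE [seq ord b (x - z)%R | z <- rem x s].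
set D := sumE [seq ord b (y - z)%R | z <- rem x s]; set E := G b (rem x s).
by rewrite -!addEA; congr addE; rewrite !addEA (addEC D B).
Qed.

Lemma alphaE S b k : alpha S b k = sumord b (some_b_ordering S b) k (some_b_ordering S b k).
Proof. by []. Qed.

Lemma main_b (S : int -> Prop) b s0 n (X : seq int) : b != 1 -> S s0 -> size X = n.+1 ->
  (forall x, x \in X -> S x) -> leE (sumE [seq alpha S b k | k <- iota 0 n.+1]) (G b X).
Proof.
move=> b1 Ss0; have [_ ok] := some_ordering_ok b Ss0.
set c := some_b_ordering S b in ok.
elim: n X => [|n IH] X.
  case: X => [|x [|]] //= _ _; rewrite alphaE /sumord /=; by [].
move=> sX SX.
set C := map c (iota 0 n.+1).
have [x xX H] := key b1 (ltac:(by rewrite size_map size_iota sX) : size C < size X).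
have h1 : leE (alpha S b n.+1) (sumE [seq ord b (x - c0)%R | c0 <- C]).
  rewrite alphaE -/c; apply: leE_trans (ok n.+1 isT x (SX x xX)) _.
  by rewrite /sumord /C -map_comp leE_refl.
have h2 := IH (rem x X) (ltac:(by rewrite size_rem // sX))
  (fun y yr => SX y (mem_rem yr)).
rewrite (G_rem b xX) -addn1 iotaD map_cat sumE_cat /= addEC.
apply: leE_add => //; have -> : addE (alpha S b n.+1) (Some 0) = alpha S b n.+1 by case: alpha => //= ?; rewrite addn0.
exact: leE_trans h1 H.
Qed.

Lemma filter_iota_gt i m : i < m -> filter (fun j => i < j) (iota 0 m) = iota i.+1 (m - i.+1).
Proof.
move=> im; rewrite -{1}(subnKC im) iotaD filter_cat add0n.
rewrite (eq_in_filter (a2 := pred0)); last by move=> j; rewrite mem_iota /= add0n ltnNge => /negbTE ->.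
rewrite filter_pred0 /=; apply/all_filterP/allP => j; rewrite mem_iota; lia.
Qed.

Lemma gammaE b n (a : nat -> int) : gamma b n a = G b (map a (iota 0 n.+1)).
Proof.
rewrite /gamma.
suff H : forall k i0, i0 + k = n.+1 ->
  sumE [seq ord b (a ij.1 - a ij.2)%R | ij <- [seq ij <- [seq (i, j) | i <- iota i0 k, j <- iota 0 n.+1] | ij.1 < ij.2]]
  = G b (map a (iota i0 k)) by exact: H.
elim=> [|k IH] i0 hk; first by [].
rewrite [iota i0 k.+1]/= allpairs_cons filter_cat map_cat sumE_cat (IH i0.+1) ?addSnnS //; congr addE.
rewrite filter_map (@eq_filter _ _ (fun j => i0 < j)) // filter_iota_gt; last by lia.
rewrite -!map_comp; have -> : n.+1 - i0.+1 = k by lia.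
by [].
Qed.

Lemma alpha_fin_uniq (S : int -> Prop) b s0 k : S s0 -> alpha S b k != None ->
  uniq (map (some_b_ordering S b) (iota 0 k.+1)).
Proof.
move=> Ss0 ak; have [Sc ok] := some_ordering_ok b Ss0.
set c := some_b_ordering S b in Sc ok ak *.
have notin : forall j, j <= k -> c j \notin map c (iota 0 j).
  move=> j jk; apply/negP => /mapP[i]; rewrite mem_iota add0n => /andP[_ ij] cij.
  have j1 : 1 <= j by lia.
  have hN : sumord b c j (c j) = None.
    apply: sumE_None; apply/mapP; exists i; first by rewrite mem_iota add0n.
    by rewrite cij subrr ord0.
  have := ok j j1 (c k) (Sc k); rewrite hN => /= hk.
  have hN' : sumord b c j (c k) = None by case: (sumord b c j (c k)) hk.
  have E : iota 0 k = iota 0 j ++ iota j (k - j) by rewrite -iotaD subnKC.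
  move: ak; rewrite alphaE -/c /sumord E map_cat sumE_cat.
  by move: hN'; rewrite /sumord => ->.
suff : forall m, m <= k.+1 -> uniq (map c (iota 0 m)) by apply.
elim=> [|m IH] // mk; rewrite -addn1 iotaD map_cat cat_uniq IH ?(ltnW mk) //= add0n.
by rewrite andbT orbF; apply: notin.
Qed.

Lemma sumE_zero (s : seq enat) : (forall e, e \in s -> e = Some 0) -> sumE s = Some 0.
Proof.
elim: s => //= e s IH H; rewrite (H e (mem_head _ _)) IH //.
by move=> e' e's; apply: H; rewrite inE e's orbT.
Qed.

Lemma sumE_01 (s : seq enat) : (forall e, e \in s -> e = Some 0 \/ e = None) ->
  sumE s = Some 0 \/ sumE s = None.
Proof.
elim: s => [|e s IH] H; first by left.
have [->|->] := H e (mem_head _ _); last by right.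
rewrite /sumE /= -/(sumE s).
have [->|->] := IH (fun e' e's => H e' (ltac:(by rewrite inE e's orbT))); [by left | by right].
Qed.

Lemma big_b_zero (S : int -> Prop) b s0 k (t : seq int) : S s0 -> b != 1 -> uniq t -> size t = k.+1 ->
  (forall x, x \in t -> S x) ->
  (forall x y, x \in t -> y \in t -> x != y -> ord b (x - y)%R = Some 0) -> alpha S b k = Some 0.
Proof.
move=> Ss0 b1 ut st St Ht.
case: k st => [|k] st; first by rewrite alphaE.
have [_ ok] := some_ordering_ok b Ss0.
set c := some_b_ordering S b in ok.
set C := map c (iota 0 k.+1).
have [x xt H] := key b1 (ltac:(by rewrite size_map size_iota st) : size C < size t).
have h0 : sumE [seq ord b (x - y)%R | y <- rem x t] = Some 0.
  apply: sumE_zero => e /mapP[y yr ->]; apply: Ht => //; first exact: mem_rem yr.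
  by move: yr; rewrite (mem_rem_uniq _ ut) inE => /andP[yx _]; rewrite eq_sym.
have h1 : leE (alpha S b k.+1) (sumE [seq ord b (x - c0)%R | c0 <- C]).
  rewrite alphaE -/c; apply: leE_trans (ok k.+1 isT x (St x xt)) _.
  by rewrite /sumord /C -map_comp leE_refl.
have := leE_trans h1 H; rewrite h0; by case: (alpha S b k.+1) => [[|]|].
Qed.

Lemma uniform_bound (t : seq int) : exists N, forall b, N < b -> forall x y, x \in t -> y \in t ->
  x != y -> ord b (x - y)%R = Some 0.
Proof.
have [N HN] : exists N, forall p, p \in [seq (x, y) | x <- t, y <- t] ->
   forall b, N < b -> p.1 != p.2 -> ord b (p.1 - p.2)%R = Some 0.
  apply: (@list_bound _ (fun N (p : int * int) => forall b, N < b -> p.1 != p.2 -> ord b (p.1 - p.2)%R = Some 0)).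
    move=> N N' p NN' H b Nb; apply: H; lia.
  move=> [x y] _; exists `|(x - y)%R|%N => b hb /= ne; apply: ord_big => //.
  by rewrite subr_eq0.
exists N => b Nb x y xt yt ne; apply: (HN (x, y)) => //; apply/allpairsP; by exists (x, y).
Qed.

Lemma finite_set (P : nat -> Prop) D : exists s, uniq s /\ forall b, b \in s <-> (P b /\ b <= D).
Proof.
elim: D => [|D [s [us Hs]]].
  case: (Classical_Prop.classic (P 0)) => H.
    exists [:: 0]; split => // b; rewrite inE; split; first by move/eqP->.
    by case=> Pb; rewrite leqn0.
  exists [::]; split => // b; split => //; case=> Pb; rewrite leqn0 => /eqP bz.
  by rewrite bz in Pb.
case: (Classical_Prop.classic (P D.+1)) => H.
  exists (D.+1 :: s); split.
    rewrite /= us andbT; apply/negP => /Hs [_]; by rewrite ltnn.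
  move=> b; rewrite inE; split.
    case/orP => [/eqP->|/Hs [Pb bD]] //; split => //; lia.
  case=> Pb; rewrite leq_eqVlt => /orP[/eqP->|bD]; first by rewrite eqxx.
  by apply/orP; right; apply/Hs; split.
exists s; split => // b; split; first by move/Hs=> [Pb bD]; split => //; lia.
case=> Pb; rewrite leq_eqVlt => /orP[/eqP bD|bD]; first by rewrite bD in Pb.
by apply/Hs.
Qed.

Lemma hasprod_ex (T : nat -> Prop) f D :
  (forall b, T b -> f b <> 0 -> f b <> 1 -> b <= D) -> exists v, HasProd T f v.
Proof.
move=> HD.
case: (Classical_Prop.classic (exists b, T b /\ f b = 0)) => [[b [Tb fb]]|H].
  by exists 0; left; exists b.
have [s [us Hs]] := finite_set (fun b => T b /\ f b <> 1) D.
exists (\prod_(b <- s) f b); right; split.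
  by move=> b Tb fb; apply: H; exists b.
exists s; split => //; split => // b'; split; first by case/Hs => [[]].
move=> [Tb fb1]; apply/Hs; split => //; apply: HD => // fb0; apply: H; by exists b'.
Qed.

Lemma powE1 e : powE 1 e = 1.
Proof. by case: e => //= k; rewrite exp1n. Qed.

Lemma F1 (S : int -> Prop) n a b : b != 1 -> (forall i, i <= n -> S (a i)) ->
  leE (sumE [seq alpha S b k | k <- iota 0 n.+1]) (gamma b n a).
Proof.
move=> b1 Ha; rewrite gammaE; apply: (main_b (s0 := a 0)) => //; first exact: Ha.
  by rewrite size_map size_iota.
move=> x /mapP[i]; rewrite mem_iota add0n => /andP[_ hi] ->; apply: Ha; by rewrite -ltnS.
Qed.

Lemma prod_exp b (s : seq nat) (f : nat -> nat) : \prod_(i <- s) b ^ f i = b ^ (\sum_(i <- s) f i).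
Proof. by elim: s => [|x s IH]; rewrite ?big_nil ?big_cons ?expn0 // IH expnD. Qed.

Lemma dvdn_big (s : seq nat) (F G : nat -> nat) : (forall i, i \in s -> F i %| G i) ->
  \prod_(i <- s) F i %| \prod_(i <- s) G i.
Proof.
elim: s => [|x s IH] H; rewrite ?big_nil ?big_cons //.
apply: dvdn_mul; first by apply: H; rewrite mem_head.
by apply: IH => i iin; apply: H; rewrite inE iin orbT.
Qed.

Lemma perb (S : int -> Prop) n a b : (forall i, i <= n -> S (a i)) -> powE b (gamma b n a) <> 0 ->
  \prod_(k < n.+1) powE b (alpha S b k) %| powE b (gamma b n a).
Proof.
move=> Ha; case b1: (b == 1).
  by move/eqP: b1 => -> _; rewrite big1 // => k _; exact: powE1.
have := @F1 S n a b (negbT b1) Ha; case E: (gamma b n a) => [g|]; last by rewrite /= b1.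
move=> hle _.
have nN : None \notin [seq alpha S b k | k <- iota 0 n.+1].
  by apply/negP => /sumE_None h; rewrite h in hle.
rewrite (sumE_Some nN) /= -map_comp sumnE big_map in hle.
have -> : \prod_(k < n.+1) powE b (alpha S b k) = \prod_(k < n.+1) b ^ (odflt 0 (alpha S b k)).
  apply: eq_bigr => k _; have : alpha S b k \in [seq alpha S b k | k <- iota 0 n.+1].
    by apply: map_f; rewrite mem_iota add0n ltn_ord.
  by case: (alpha S b k) => // h; rewrite h in nN.
rewrite -(big_mkord xpredT (fun k => b ^ (odflt 0 (alpha S b k)))) /index_iota subn0 prod_exp /=.
apply: dvdn_exp2l; rewrite big_cons; exact: hle.
Qed.

Theorem theorem3p15 (S : int -> Prop) (n : nat) (a : nat -> int) (T : nat -> Prop) :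
  (forall i, i <= n -> S (a i)) ->
  exists (v : nat) (w : nat -> nat),
    HasProd T (fun b => powE b (gamma b n a)) v /\
    (forall k, k <= n -> IsGenFact S T k (w k)) /\
    (\prod_(k < n.+1) w k %| v).
Proof.
move=> Ha.
have Ss0 : S (a 0) := Ha 0 (leq0n n).
have [v Hv] : exists v, HasProd T (fun b => powE b (gamma b n a)) v.
  have [N HN] := uniform_bound (map a (iota 0 n.+1)).
  apply: (@hasprod_ex _ _ N) => b _ f0 f1; rewrite leqNgt; apply/negP => Nb.
  have : gamma b n a = Some 0 \/ gamma b n a = None.
    rewrite /gamma; apply: sumE_01 => e /mapP[[i j] ij ->] /=.
    move: ij; rewrite mem_filter => /andP[_ hij].
    move/allpairsP: hij => [[i' j'] [/= hi hj eij]].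
    case: eij => -> ->.
    case: (eqVneq (a i') (a j')) => [->|ne]; first by rewrite subrr ord0; right.
    by left; apply: HN => //; apply: map_f.
  case=> E; rewrite E in f0 f1; first by apply: f1.
  by move: f0 f1 => /=; case: (b == 1).
have Hw : forall k, k <= n -> exists w, HasProd T (fun b => powE b (alpha S b k)) w.
  move=> k kn.
  case: (Classical_Prop.classic (exists b0, T b0 /\ powE b0 (alpha S b0 k) <> 0 /\ powE b0 (alpha S b0 k) <> 1)) => [[b0 [Tb0 [f0 f1]]]|H]; last first.
    by apply: (@hasprod_ex _ _ 0) => b Tb f0 f1; exfalso; apply: H; exists b.
  have b01 : b0 != 1 by apply/negP => /eqP e; apply: f1; rewrite e powE1.
  have aN : alpha S b0 k != None.
    by apply/negP => /eqP e; move: f0 f1; rewrite e /=; case: (b0 == 1).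
  have ut := alpha_fin_uniq Ss0 aN.
  have [Sc _] := some_ordering_ok b0 Ss0.
  set t := map (some_b_ordering S b0) (iota 0 k.+1) in ut.
  have [N HN] := uniform_bound t.
  apply: (@hasprod_ex _ _ (maxn N 1)) => b Tb g0 g1; rewrite leqNgt; apply/negP => Nb.
  apply: g1; rewrite (@big_b_zero S b (a 0) k t Ss0) //.
  - by apply/negP => /eqP e; rewrite e in Nb; move: Nb; rewrite gtn_max => /andP[].
  - by rewrite size_map size_iota.
  - by move=> x /mapP[i _ ->].
  - by apply: HN; move: Nb; rewrite gtn_max => /andP[].
pose w k := epsilon (inhabits 0) (fun w => HasProd T (fun b => powE b (alpha S b k)) w).
have Hw' : forall k, k <= n -> HasProd T (fun b => powE b (alpha S b k)) (w k).
  by move=> k kn; exact: (epsilon_spec (inhabits 0) (fun w => HasProd T (fun b => powE b (alpha S b k)) w) (Hw k kn)).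
exists v, w; split => //; split; first by move=> k kn; exact: Hw'.
case: Hv => [[b [_ [_ ->]]]|[hv0 [sv [usv [Hsv ->]]]]]; first exact: dvdn0.
have per : forall b, T b -> \prod_(k < n.+1) powE b (alpha S b k) %| powE b (gamma b n a).
  by move=> b Tb; apply: perb => //; apply: hv0.
have wk : forall k : 'I_n.+1, w k = \prod_(b <- sv) powE b (alpha S b k).
  move=> k; have := Hw' k (ltac:(by rewrite -ltnS ltn_ord)).
  case => [[b [Tb [fb0 _]]]|[_ [sk [usk [Hsk ->]]]]].
    exfalso; have := per b Tb; rewrite (bigD1 k) //= fb0 mul0n dvd0n => /eqP.
    exact: hv0.
  have sub : forall b, b \in sk -> b \in sv.
    move=> b /Hsk [Tb f1]; apply/Hsv; split => // fv1; apply: f1.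
    have := per b Tb; rewrite fv1 dvdn1 (bigD1 k) //= muln_eq1 => /andP[/eqP -> _] //.
  rewrite [RHS](bigID (fun b => b \in sk)) /= [X in _ * X]big1_seq ?muln1; last first.
    move=> b /andP[nb bs]; case: (Classical_Prop.classic (powE b (alpha S b k) = 1)) => [//|h].
    by exfalso; move/negP: nb; apply; apply/Hsk; split => //; case/Hsv: bs.
  rewrite -[X in _ = X]big_filter; apply: perm_big; apply: uniq_perm => //; first exact: filter_uniq.
  move=> b; rewrite mem_filter; case: (boolP (b \in sk)) => //= bk; by rewrite (sub b bk).
rewrite (eq_bigr _ (fun k _ => wk k)) exchange_big /=.
apply: dvdn_big => b bs; apply: per; by case/Hsv: bs.
Qed.
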